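(* Let $K$ be the transition kernel of a Markov chain on a general state space, reversible with respect to $\pi$. For any $f\in L_2(\pi)$ with $\|f\|_{2,\pi}\neq0$ and every integer $n\ge1$, $$\frac{\|K^nf\|_{2,\pi}^2}{\|f\|_{2,\pi}^2}\ge\Big(\frac{\|Kf\|_{2,\pi}^2}{\|f\|_{2,\pi}^2}\Big)^n.$$
   Context: Reversibility: $K(x,dy)\pi(dx)=K(y,dx)\pi(dy)$. $(Kf)(x)=\int K(x,dy)f(y)$, $K^n f=K(K^{n-1}f)$. $\|f\|_{2,\pi}^2=\int f^2d\pi$. *)

(* Defs.v *)
From HB Require Import structures.
From mathcomp Require Import all_boot all_order all_algebra.
From mathcomp Require Import all_classical all_reals all_analysis.
Set Implicit Arguments. Unset Strict Implicit. Unset Printing Implicit Defensive.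
Import Order.TTheory GRing.Theory Num.Theory.
Import numFieldNormedType.Exports.
Local Open Scope classical_set_scope.
Local Open Scope ring_scope.

Definition Kop d (T : measurableType d) (R : realType)
  (K : R.-pker T ~> T) (f : T -> R) : T -> R :=
  fun x => (\int[K x]_(y in setT) f y)%R.

Definition Kpow d (T : measurableType d) (R : realType)
  (K : R.-pker T ~> T) (n : nat) (f : T -> R) : T -> R :=
  iter n (Kop K) f.

Definition L2norm2 d (T : measurableType d) (R : realType)
  (pi : {measure set T -> \bar R}) (g : T -> R) : R :=
  (\int[pi]_(x in setT) (g x ^+ 2))%R.

(* Reversibility: K(x,dy) pi(dx) = K(y,dx) pi(dy), i.e. for all measurable
   A, B:  \int_A K(x,B) pi(dx) = \int_B K(y,A) pi(dy). *)
Definition reversible d (T : measurableType d) (R : realType)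
  (K : R.-pker T ~> T) (pi : {measure set T -> \bar R}) : Prop :=
  forall A B : set T, measurable A -> measurable B ->
    (\int[pi]_(x in A) K x B = \int[pi]_(y in B) K y A)%E.

Definition inL2 d (T : measurableType d) (R : realType)
  (pi : {measure set T -> \bar R}) (f : T -> R) : Prop :=
  measurable_fun setT f /\ (\int[pi]_x ((f x ^+ 2)%:E) < +oo)%E.

(* Main.v *)
Require Import Defs.
From HB Require Import structures.
From mathcomp Require Import all_boot all_order all_algebra.
From mathcomp Require Import all_classical all_reals all_analysis.
From mathcomp Require Import ring lra measurable_realfun.
Import Order.TTheory GRing.Theory Num.Theory.
Local Open Scope ring_scope.

Module XH.
Import Order.TTheory GRing.Theory Num.Theory.
Import numFieldNormedType.Exports.
Local Open Scope classical_set_scope.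
Local Open Scope ring_scope.

Lemma quad_disc (R : realType) (A B C : R) : 0 <= A -> 0 <= B ->
  (forall t, 0 <= A + 2 * t * C + t ^+ 2 * B) -> C ^+ 2 <= A * B.
Proof.
move=> A0 B0 H.
have [B0'|Bp] := eqVneq B 0.
  subst B.
  have [C0|Cn] := eqVneq C 0; first by subst C; rewrite expr0n /= mulr0.
  have := H (- (A + 1) / (2 * C)).
  have -> : 2 * (- (A + 1) / (2 * C)) * C = - (A + 1).
    by field; rewrite Cn.
  lra.
have Bpos : 0 < B by rewrite lt_def Bp B0.
have := H (- C / B).
have -> : A + 2 * (- C / B) * C + (- C / B) ^+ 2 * B = (A * B - C ^+ 2) / B.
  by field; rewrite Bp.
rewrite pmulr_lge0 ?invr_gt0 //; lra.
Qed.

End XH.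
Import XH.

Module XCS.
Set Implicit Arguments. Unset Strict Implicit.
Import Order.TTheory GRing.Theory Num.Theory.
Import numFieldNormedType.Exports.
Local Open Scope classical_set_scope.
Local Open Scope ring_scope.

Section CS.
Context d (T : measurableType d) (R : realType) (mu : {measure set T -> \bar R}).

Lemma int_mul2 (g h : T -> R) :
  measurable_fun setT g -> measurable_fun setT h ->
  mu.-integrable setT (fun x => (g x ^+ 2)%:E) ->
  mu.-integrable setT (fun x => (h x ^+ 2)%:E) ->
  mu.-integrable setT (fun x => (g x * h x)%:E).
Proof.
move=> mg mh ig ih.
apply: (@le_integrable _ _ _ mu setT measurableT _ (fun x => (g x ^+ 2)%:E + (h x ^+ 2)%:E)%E).
- by apply/measurable_EFinP; apply: measurable_funM.
- move=> x _; rewrite -EFinD !abse_EFin lee_fin.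
  rewrite [X in _ <= X]ger0_norm; last by rewrite addr_ge0 // sqr_ge0.
  rewrite normrM; have := sqr_ge0 (`|g x| - `|h x|).
  rewrite -(real_normK (num_real (g x))) -(real_normK (num_real (h x))).
  have := normr_ge0 (g x); have := normr_ge0 (h x). nra.
- exact: integrableD.
Qed.

Lemma CS (g h : T -> R) :
  measurable_fun setT g -> measurable_fun setT h ->
  mu.-integrable setT (fun x => (g x ^+ 2)%:E) ->
  mu.-integrable setT (fun x => (h x ^+ 2)%:E) ->
  (\int[mu]_x (g x * h x)) ^+ 2 <= \int[mu]_x (g x ^+ 2) * \int[mu]_x (h x ^+ 2).
Proof.
move=> mg mh ig ih.
have igh := int_mul2 mg mh ig ih.
apply: quad_disc; try by apply: Rintegral_ge0 => x _; exact: sqr_ge0.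
move=> t.
have e : forall x, (g x + t * h x) ^+ 2 = (g x ^+ 2 + (2 * t) * (g x * h x)) + t ^+ 2 * (h x ^+ 2).
  by move=> x; ring.
have ih2 : mu.-integrable setT (EFin \o (fun x => (2 * t) * (g x * h x))).
  apply: (@eq_integrable _ _ _ mu _ measurableT (fun x => (2 * t)%:E * (g x * h x)%:E)%E) => //.
    all: try exact: integrableZl.
  all: try by move=> x _; rewrite /= EFinM.
have ih3 : mu.-integrable setT (EFin \o (fun x => t ^+ 2 * (h x ^+ 2))).
  apply: (@eq_integrable _ _ _ mu _ measurableT (fun x => (t ^+ 2)%:E * (h x ^+ 2)%:E)%E) => //.
    all: try exact: integrableZl.
  all: try by move=> x _; rewrite /= EFinM.
have : 0 <= \int[mu]_x ((g x + t * h x) ^+ 2) by apply: Rintegral_ge0 => x _; exact: sqr_ge0.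
under eq_Rintegral do rewrite e.
rewrite RintegralD //; last first.
  by rewrite (_ : _ \o _ = (fun x => (g x ^+ 2)%:E + (2 * t * (g x * h x))%:E)%E);
    [exact: integrableD | apply/funext => x; rewrite /= EFinD].
rewrite RintegralD // RintegralZl // RintegralZl //.
Qed.
End CS.

End XCS.
Import XCS.

Module XJ.
Set Implicit Arguments. Unset Strict Implicit.
Import Order.TTheory GRing.Theory Num.Theory.
Import numFieldNormedType.Exports.
Local Open Scope classical_set_scope.
Local Open Scope ring_scope.

Section J.
Context d (T : measurableType d) (R : realType) (mu : {measure set T -> \bar R}).
Hypothesis mu1 : mu setT = 1%E.

Lemma int_cst1 : mu.-integrable setT (fun x : T => ((1:R) ^+ 2)%:E).
Proof.
apply/integrableP; split => //.
rewrite (_ : (fun x => _) = cst 1%E); last by apply/funext => x; rewrite expr1n /= normr1.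
by rewrite integral_cst // mu1 mule1 ltry.
Qed.

Lemma sq_int_int (u : T -> R) : measurable_fun setT u ->
  mu.-integrable setT (fun x => (u x ^+ 2)%:E) ->
  mu.-integrable setT (fun x => (u x)%:E).
Proof.
move=> mu_ iu.
have := int_mul2 mu_ (measurable_cst (1:R)) iu int_cst1.
by apply: eq_integrable => // x _; rewrite mulr1.
Qed.

Lemma Rint1 : \int[mu]_(x in setT) ((1:R) ^+ 2) = 1.
Proof. by rewrite Rintegral_cst // mu1 /= expr1n mul1r. Qed.

Lemma jensenR (u : T -> R) : measurable_fun setT u ->
  (((\int[mu]_x u x) ^+ 2)%:E <= \int[mu]_x (u x ^+ 2)%:E)%E.
Proof.
move=> mu_.
have [iu|niu] := boolP (\int[mu]_x (u x ^+ 2)%:E < +oo)%E; last first.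
  by rewrite ltey negbK in niu; rewrite (eqP niu) leey.
have iu2 : mu.-integrable setT (fun x => (u x ^+ 2)%:E).
  apply/integrableP; split; first by apply/measurable_EFinP; exact: measurable_funX.
  by under eq_integral do rewrite gee0_abs ?lee_fin ?sqr_ge0 //.
have := CS mu_ (measurable_cst (1:R)) iu2 int_cst1.
rewrite Rint1 mulr1.
under eq_Rintegral do rewrite mulr1.
rewrite -lee_fin => H; apply: (le_trans H).
rewrite /Rintegral fineK //.
by rewrite ge0_fin_numE // integral_ge0 // => x _; rewrite lee_fin sqr_ge0.
Qed.

End J.

End XJ.
Import XJ.

Module XS1.
Set Implicit Arguments. Unset Strict Implicit.
Import Order.TTheory GRing.Theory Num.Theory.
Import numFieldNormedType.Exports.
Local Open Scope classical_set_scope.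
Local Open Scope ring_scope.
Local Open Scope ereal_scope.
Import HBNNSimple.

Lemma cvg_mulc (R : realType) (a : (\bar R)^nat) (A c : \bar R) :
  (forall n, 0 <= a n) -> (forall n, a n <= A) -> 0 <= c ->
  a n @[n --> \oo] --> A -> (a n * c) @[n --> \oo] --> A * c.
Proof.
move=> a0 aA c0 aA'.
have [->|c0'] := eqVneq c 0.
  by rewrite mule0; under eq_fun do rewrite mule0; exact: cvg_cst.
have [A0|A0] := eqVneq A 0.
  rewrite A0 mul0e.
  have e : forall n, a n = 0 by move=> n; apply/eqP; rewrite eq_le a0 andbT -A0 aA.
  by under eq_fun do rewrite e mul0e; exact: cvg_cst.
apply: cvgeM => //; last exact: cvg_cst.
have [cf|cf] := boolP (c \is a fin_num); last exact: mule_def_neq0_infty.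
have [Af|Af] := boolP (A \is a fin_num); first exact: mule_def_fin.
exact: mule_def_infty_neq0.
Qed.

Lemma approx_le d (T : measurableType d) (R : realType) (g : T -> \bar R)
  (g0 : forall x, 0 <= g x) (mg : measurable_fun setT g) n x :
  ((nnsfun_approx measurableT mg n x)%:E <= g x).
Proof.
have cv := cvg_nnsfun_approx measurableT mg (fun x _ => g0 x) (I : setT x).
rewrite -(cvg_lim _ cv) //.
apply: lime_ge; first by apply/cvg_ex; eexists; exact: cv.
near=> m; rewrite /= lee_fin; apply/lefP/nd_nnsfun_approx.
by near: m; exists n.
Unshelve. all: by end_near.
Qed.

End XS1.
Import XS1.

Module XS2.
Set Implicit Arguments. Unset Strict Implicit.
Import Order.TTheory GRing.Theory Num.Theory.
Import numFieldNormedType.Exports.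
Local Open Scope classical_set_scope.
Local Open Scope ring_scope.
Local Open Scope ereal_scope.
Import HBNNSimple.

Section mct.
Context d (T : measurableType d) (R : realType) (m : {measure set T -> \bar R}).

Lemma mct (G : (T -> \bar R)^nat) (F : T -> \bar R) :
  (forall n, measurable_fun setT (G n)) -> (forall n x, 0 <= G n x) ->
  (forall x, nondecreasing_seq (G ^~ x)) -> (forall x, G n x @[n --> \oo] --> F x) ->
  \int[m]_x G n x @[n --> \oo] --> \int[m]_x F x.
Proof.
move=> mG G0 ndG GF.
have := @cvg_monotone_convergence _ _ _ m setT measurableT G (fun n => mG n)
  (fun n x _ => G0 n x) (fun x _ => ndG x).
suff -> : \int[m]_x F x = \int[m]_x limn (G ^~ x) by [].
by apply: eq_integral => x _; apply/esym/cvg_lim => //; exact: GF.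
Qed.

Lemma int_simple (f : {nnsfun T >-> R}) (u : T -> \bar R) :
  (forall x, 0 <= u x) -> measurable_fun setT u ->
  \int[m]_x ((f x)%:E * u x) =
  \sum_(r \in range f) r%:E * \int[m]_x ((\1_(f @^-1` [set r]) x)%:E * u x).
Proof.
move=> u0 mu.
have fr : finite_set (range f) by exact: fimfunP.
transitivity (\int[m]_x (\sum_(r \in range f) (r * \1_(f @^-1` [set r]) x)%:E * u x)).
  apply: eq_integral => x _; rewrite -ge0_mule_fsuml; last first.
    by move=> r; exact: nnfun_muleindic_ge0.
  by rewrite fsumEFin // -fimfunE.
rewrite ge0_integral_fsum //; last 2 first.
- move=> r; apply: emeasurable_funM => //.
  by apply/measurable_EFinP; apply: measurable_funM => //; exact: measurable_indic.
- by move=> r x _; rewrite mule_ge0 // nnfun_muleindic_ge0.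
apply: eq_fsbigr => r; rewrite inE => -[t _ <-].
under eq_integral do rewrite EFinM -muleA.
rewrite ge0_integralZl //.
- by apply: emeasurable_funM => //; apply/measurable_EFinP; exact: measurable_indic.
- by move=> x _; rewrite mule_ge0 // lee_fin.
- by rewrite lee_fin.
Qed.

End mct.

End XS2.
Import XS2.

Module XS3.
Set Implicit Arguments. Unset Strict Implicit.
Import Order.TTheory GRing.Theory Num.Theory.
Import numFieldNormedType.Exports.
Local Open Scope classical_set_scope.
Local Open Scope ring_scope.
Local Open Scope ereal_scope.
Import HBNNSimple.

Section Sym.
Context d (T : measurableType d) (R : realType) (pi : {measure set T -> \bar R})
  (K : R.-ker T ~> T).

Definition KI (u : T -> \bar R) x := \int[K x]_y u y.
Definition Bf (g h : T -> \bar R) := \int[pi]_x (g x * KI h x).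

Lemma KI_ge0 u : (forall x, 0 <= u x) -> forall x, 0 <= KI u x.
Proof. by move=> u0 x; apply: integral_ge0 => y _. Qed.

Lemma KI_meas u : (forall x, 0 <= u x) -> measurable_fun setT u ->
  measurable_fun setT (KI u).
Proof.
move=> u0 mu; apply: measurable_fun_integral_kernel => //.
exact: measurable_kernel.
Qed.

Lemma KI_simple (f : {nnsfun T >-> R}) x :
  KI (EFin \o f) x = \sum_(r \in range f) r%:E * KI (EFin \o \1_(f @^-1` [set r])) x.
Proof.
rewrite /KI.
transitivity (\int[K x]_y ((f y)%:E * 1)).
  by apply: eq_integral => y _; rewrite mule1.
rewrite int_simple //.
apply: eq_fsbigr => r _; congr (_ * _).
by apply: eq_integral => y _; rewrite mule1.
Qed.

Lemma Bf_simple_l (f : {nnsfun T >-> R}) u : (forall x, 0 <= u x) ->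
  measurable_fun setT u ->
  Bf (EFin \o f) u = \sum_(r \in range f) r%:E * Bf (EFin \o \1_(f @^-1` [set r])) u.
Proof.
move=> u0 mu; rewrite /Bf int_simple //; first exact: KI_ge0.
exact: KI_meas.
Qed.

Lemma Bf_simple_r (f : {nnsfun T >-> R}) u : (forall x, 0 <= u x) ->
  measurable_fun setT u ->
  Bf u (EFin \o f) = \sum_(r \in range f) r%:E * Bf u (EFin \o \1_(f @^-1` [set r])).
Proof.
move=> u0 mu.
have fr : finite_set (range f) by exact: fimfunP.
have i0 r : forall x, 0 <= (EFin \o \1_(f @^-1` [set r])) x by move=> x; rewrite lee_fin.
have im r : measurable_fun setT (EFin \o \1_(f @^-1` [set r])).
  by apply/measurable_EFinP; exact: measurable_indic.
rewrite /Bf.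
have F0 r x : 0 <= r%:E * KI (EFin \o \1_(f @^-1` [set r])) x.
  have [r0|r0] := leP 0%R r; first by rewrite mule_ge0 // ?lee_fin // KI_ge0.
  rewrite preimage_nnfun0 // indic0 /KI integral0_eq ?mule0 // => y _.
transitivity (\int[pi]_x (\sum_(r \in range f) r%:E * (u x * KI (EFin \o \1_(f @^-1` [set r])) x))).
  apply: eq_integral => x _; rewrite KI_simple ge0_mule_fsumr //.
  by apply: eq_fsbigr => r _; rewrite muleCA.
rewrite ge0_integral_fsum //; last 2 first.
- move=> r; apply: emeasurable_funM => //.
  by apply: emeasurable_funM => //; exact: KI_meas.
- move=> r x _; rewrite muleCA mule_ge0 //.
apply: eq_fsbigr => r; rewrite inE => -[t _ <-].
rewrite ge0_integralZl //.
- by apply: emeasurable_funM => //; exact: KI_meas.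
- by move=> x _; rewrite mule_ge0 // KI_ge0.
- by rewrite lee_fin.
Qed.


Lemma Bf_ext h : (forall x, 0 <= h x) -> measurable_fun setT h ->
  (forall A, measurable A -> Bf (EFin \o \1_A) h = Bf h (EFin \o \1_A)) ->
  forall g, (forall x, 0 <= g x) -> measurable_fun setT g -> Bf g h = Bf h g.
Proof.
move=> h0 mh hA g g0 mg.
pose fn := nnsfun_approx measurableT mg.
have simp n : Bf (EFin \o fn n) h = Bf h (EFin \o fn n).
  rewrite Bf_simple_l // Bf_simple_r //; apply: eq_fsbigr => r _.
  by rewrite hA.
have fle n x : (fn n x)%:E <= g x by exact: approx_le.
have fcv x : (fn n x)%:E @[n --> \oo] --> g x.
  exact: (cvg_nnsfun_approx measurableT mg (fun x _ => g0 x) (I : setT x)).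
have fnd x : nondecreasing_seq (fun n => (fn n x)%:E).
  by move=> a b ab; rewrite lee_fin; exact/lefP/nd_nnsfun_approx.
have cv1 : Bf (EFin \o fn n) h @[n --> \oo] --> Bf g h.
  apply: mct.
  - by move=> n; apply: emeasurable_funM => //; [exact/measurable_EFinP | exact: KI_meas].
  - by move=> n x; rewrite mule_ge0 // ?lee_fin // KI_ge0.
  - by move=> x a b ab; rewrite lee_wpmul2r // ?KI_ge0 //; exact: (fnd x a b ab).
  - move=> x; apply: cvg_mulc.
    + by move=> n; rewrite lee_fin.
    + by move=> n; exact: fle.
    + exact: KI_ge0.
    + exact: fcv.
have KIle n x : KI (EFin \o fn n) x <= KI g x.
  apply: ge0_le_integral => //.
  all: try (by move=> y _; rewrite lee_fin).
  all: try exact/measurable_EFinP.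
  by move=> y _; exact: fle.
have KIcv x : KI (EFin \o fn n) x @[n --> \oo] --> KI g x.
  apply: mct.
  - by move=> n; exact/measurable_EFinP.
  - by move=> n y; rewrite lee_fin.
  - by move=> y; exact: fnd.
  - by move=> y; exact: fcv.
have KInd x : nondecreasing_seq (fun n => KI (EFin \o fn n) x).
  move=> a b ab; apply: ge0_le_integral => //.
  all: try (by move=> y _; rewrite lee_fin).
  all: try exact/measurable_EFinP.
  by move=> y _; exact: (fnd y a b ab).
have cv2 : Bf h (EFin \o fn n) @[n --> \oo] --> Bf h g.
  apply: mct.
  - move=> n; apply: emeasurable_funM => //; apply: KI_meas => //.
      by move=> x; rewrite lee_fin.
    exact/measurable_EFinP.
  - by move=> n x; rewrite mule_ge0 // KI_ge0 // => y; rewrite lee_fin.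
  - by move=> x a b ab; rewrite lee_wpmul2l //; exact: (KInd x a b ab).
  - move=> x; under eq_fun do rewrite muleC; rewrite muleC.
    apply: cvg_mulc.
    + by move=> n; apply: KI_ge0 => y; rewrite lee_fin.
    + by move=> n; exact: KIle.
    + exact: h0.
    + exact: KIcv.
have e : (fun n => Bf (EFin \o fn n) h) = (fun n => Bf h (EFin \o fn n)).
  by apply/funext => n; exact: simp.
rewrite e in cv1.
exact: (cvg_unique _ cv1 cv2).
Qed.

End Sym.

End XS3.
Import XS3.

Module XS4.
Set Implicit Arguments. Unset Strict Implicit.
Import Order.TTheory GRing.Theory Num.Theory.
Import numFieldNormedType.Exports.
Local Open Scope classical_set_scope.
Local Open Scope ring_scope.
Local Open Scope ereal_scope.

Section Sym2.
Context d (T : measurableType d) (R : realType) (pi : {measure set T -> \bar R})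
  (K : R.-pker T ~> T) (hrev : reversible K pi).

Lemma Bf_indic A B : measurable A -> measurable B ->
  Bf pi K (EFin \o \1_A) (EFin \o \1_B) = \int[pi]_(x in A) K x B.
Proof.
move=> mA mB; rewrite /Bf [RHS]integral_mkcond epatch_indic.
apply: eq_integral => x _ /=; rewrite muleC /KI integral_indic // setIT.
by [].
Qed.

Lemma Bf_sym g h : (forall x, 0 <= g x) -> measurable_fun setT g ->
  (forall x, 0 <= h x) -> measurable_fun setT h -> Bf pi K g h = Bf pi K h g.
Proof.
have i0 A : forall x, 0 <= (EFin \o \1_A) x :> \bar R by move=> x; rewrite lee_fin.
have step1 B : measurable B -> forall u, (forall x, 0 <= u x) -> measurable_fun setT u ->
    Bf pi K u (EFin \o \1_B) = Bf pi K (EFin \o \1_B) u.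
  move=> mB; apply: Bf_ext => //.
    by apply/measurable_EFinP; exact: measurable_indic.
  by move=> A mA; rewrite !Bf_indic // hrev.
move=> g0 mg h0 mh; apply: Bf_ext => // A mA.
by rewrite step1.
Qed.

End Sym2.

End XS4.
Import XS4.

Module XL.
Set Implicit Arguments. Unset Strict Implicit.
Import Order.TTheory GRing.Theory Num.Theory.
Import numFieldNormedType.Exports.
Local Open Scope classical_set_scope.
Local Open Scope ring_scope.

Section L2.
Context d (T : measurableType d) (R : realType) (pi : probability T R)
  (K : R.-pker T ~> T) (hrev : reversible K pi).

Lemma KI1 x : KI K (fun _ => 1%E) x = 1%E.
Proof. by rewrite /KI integral_cst // prob_kernel mule1. Qed.

Lemma Stat u : (forall x, (0 <= u x)%E) -> measurable_fun setT u ->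
  (\int[pi]_x KI K u x = \int[pi]_x u x)%E.
Proof.
move=> u0 mu.
have := @Bf_sym _ _ _ pi K hrev (fun _ => 1%E) u (fun _ => lee01) (measurable_cst _) u0 mu.
rewrite /Bf.
under eq_integral do rewrite mul1e.
move=> ->; apply: eq_integral => x _; by rewrite KI1 mule1.
Qed.

Lemma Jbound g : measurable_fun setT g -> forall x,
  (((Kop K g x) ^+ 2)%:E <= KI K (fun y => (g y ^+ 2)%:E) x)%E.
Proof. by move=> mg x; apply: jensenR => //; exact: prob_kernel. Qed.

Lemma Kop_meas g : measurable_fun setT g -> measurable_fun setT (Kop K g).
Proof.
move=> mg.
have -> : Kop K g = fine \o (fun x => KI K (EFin \o g)^\+ x - KI K (EFin \o g)^\- x)%E.
  apply/funext => x; rewrite /Kop /Rintegral /= /KI.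
  rewrite [in LHS]integralE.
reflexivity.
apply: measurableT_comp => //.
apply: emeasurable_funB; apply: KI_meas => //.
- by apply: measurable_funepos; exact/measurable_EFinP.
- by apply: measurable_funeneg; exact/measurable_EFinP.
Qed.

Lemma L2_int g : inL2 pi g -> pi.-integrable setT (fun x => (g x ^+ 2)%:E).
Proof.
move=> [mg ig]; apply/integrableP; split; first by apply/measurable_EFinP; exact: measurable_funX.
by under eq_integral do rewrite gee0_abs ?lee_fin ?sqr_ge0 //.
Qed.

Lemma KL2 g : inL2 pi g -> inL2 pi (Kop K g).
Proof.
move=> [mg ig]; split; first exact: Kop_meas.
apply: (le_lt_trans _ ig).
rewrite -(Stat (u := fun y => (g y ^+ 2)%:E)); last 2 first.
- by move=> x; rewrite lee_fin sqr_ge0.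
- by apply/measurable_EFinP; exact: measurable_funX.
apply: ge0_le_integral => //.
- by move=> x _; rewrite lee_fin sqr_ge0.
- by apply/measurable_EFinP; apply: measurable_funX; exact: Kop_meas.
- apply: KI_meas; first by move=> x; rewrite lee_fin sqr_ge0.
  by apply/measurable_EFinP; exact: measurable_funX.
- by move=> x _; exact: Jbound.
Qed.

End L2.

End XL.
Import XL.

Module XM.
Set Implicit Arguments. Unset Strict Implicit.
Import Order.TTheory GRing.Theory Num.Theory.
Import numFieldNormedType.Exports.
Local Open Scope classical_set_scope.
Local Open Scope ring_scope.

Lemma amgm (R : realType) (p q : \bar R) : (0 <= p)%E -> (0 <= q)%E ->
  (p * q <= p * p + q * q)%E.
Proof.
case: p => [p| |] //; case: q => [q| |] // p0 q0.
- rewrite -!EFinM -EFinD lee_fin; rewrite !lee_fin in p0 q0; nra.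
all: try by rewrite mulyy ?addey ?addye ?leey.
Qed.

Definition pp (R : realType) T (g : T -> R) x := Num.max (g x) 0.
Definition nn (R : realType) T (g : T -> R) x := Num.max (- g x) 0.

Lemma ppE (R : realType) T (g : T -> R) x : ((EFin \o g)^\+ x)%E = (pp g x)%:E.
Proof. by rewrite funeposE /pp /= EFin_max. Qed.
Lemma nnE (R : realType) T (g : T -> R) x : ((EFin \o g)^\- x)%E = (nn g x)%:E.
Proof. by rewrite funenegE /nn /= EFin_max. Qed.
Lemma ppnn (R : realType) T (g : T -> R) x : g x = pp g x - nn g x.
Proof.
rewrite /pp /nn; case: (lerP 0 (g x)) => h.
- by rewrite max_r ?subr0 // oppr_le0.
- by rewrite max_l ?sub0r ?opprK // oppr_ge0 ltW.
Qed.
Lemma pp_ge0 (R : realType) T (g : T -> R) x : 0 <= pp g x.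
Proof. by rewrite /pp le_max lexx orbT. Qed.
Lemma nn_ge0 (R : realType) T (g : T -> R) x : 0 <= nn g x.
Proof. by rewrite /nn le_max lexx orbT. Qed.
Lemma pp_le (R : realType) T (g : T -> R) x : pp g x <= `|g x|.
Proof. by rewrite /pp ge_max normr_ge0 ler_norm. Qed.
Lemma nn_le (R : realType) T (g : T -> R) x : nn g x <= `|g x|.
Proof. by rewrite /nn ge_max normr_ge0 -normrN ler_norm. Qed.
Lemma pp_meas d (T : measurableType d) (R : realType) (g : T -> R) :
  measurable_fun setT g -> measurable_fun setT (pp g).
Proof. by move=> mg; apply: measurable_maxr. Qed.
Lemma nn_meas d (T : measurableType d) (R : realType) (g : T -> R) :
  measurable_fun setT g -> measurable_fun setT (nn g).
Proof. by move=> mg; apply: measurable_maxr => //; exact: measurableT_comp. Qed.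

End XM.
Import XM.

Module XD.
Set Implicit Arguments. Unset Strict Implicit.
Import Order.TTheory GRing.Theory Num.Theory.
Import numFieldNormedType.Exports.
Local Open Scope classical_set_scope.
Local Open Scope ring_scope.

Section D.
Context d (T : measurableType d) (R : realType) (pi : probability T R)
  (K : R.-pker T ~> T) (hrev : reversible K pi).

Lemma KIabs_bound (h : T -> R) : measurable_fun setT h -> forall x,
  (KI K (EFin \o (fun y => `|h y|%R)) x * KI K (EFin \o (fun y => `|h y|%R)) x
    <= KI K (fun y => (h y ^+ 2)%:E) x)%E.
Proof.
move=> mh x.
have [inf|fin] := eqVneq (KI K (fun y => (h y ^+ 2)%:E) x) +oo%E.
  by rewrite inf leey.
have mah : measurable_fun setT (fun y => `|h y|) by exact: measurableT_comp.
have i2 : (K x).-integrable setT (fun y => (`|h y| ^+ 2)%:E).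
  apply/integrableP; split.
    by apply/measurable_EFinP; exact: measurable_funX.
  under eq_integral do rewrite gee0_abs ?lee_fin ?sqr_ge0 // real_normK ?num_real //.
  by rewrite ltey.
have K1 : K x setT = 1%E by exact: prob_kernel.
have i1 := sq_int_int K1 mah i2.
have e : KI K (EFin \o (fun y => `|h y|)) x = (Kop K (fun y => `|h y|) x)%:E.
  by rewrite /KI /Kop /Rintegral fineK //; exact: integrable_fin_num.
rewrite e -EFinM -expr2; apply: le_trans (Jbound K mah x) _.
by rewrite le_eqVlt; apply/orP; left; apply/eqP; apply: eq_integral => y _;
  rewrite real_normK ?num_real.
Qed.

Lemma Bf_absfin (g h : T -> R) : inL2 pi g -> inL2 pi h ->
  (Bf pi K (EFin \o (fun x => `|g x|%R)) (EFin \o (fun y => `|h y|%R)) < +oo)%E.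
Proof.
move=> [mg ig] [mh ih].
have mah : measurable_fun setT (fun y => `|h y|) by exact: measurableT_comp.
have mag : measurable_fun setT (fun y => `|g y|) by exact: measurableT_comp.
have mKI : measurable_fun setT (KI K (EFin \o (fun y => `|h y|))).
  by apply: KI_meas => //; [move=> y; rewrite lee_fin | exact/measurable_EFinP].
have mKI2 : measurable_fun setT (KI K (fun y => (h y ^+ 2)%:E)).
  apply: KI_meas => //; first by move=> y; rewrite lee_fin sqr_ge0.
  by apply/measurable_EFinP; exact: measurable_funX.
apply: (@le_lt_trans _ _ (\int[pi]_x ((g x ^+ 2)%:E + KI K (fun y => (h y ^+ 2)%:E) x))%E).
  apply: ge0_le_integral => //.
  - by move=> x _; rewrite mule_ge0 // ?lee_fin // KI_ge0 // => y; rewrite lee_fin.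
  - by apply: emeasurable_funM => //; exact/measurable_EFinP.
  - apply: emeasurable_funD => //.
    by apply/measurable_EFinP; exact: measurable_funX.
  - move=> x _; apply: le_trans (amgm _ _) _.
    + by rewrite lee_fin.
    + by apply: KI_ge0 => y; rewrite lee_fin.
    apply: leeD; last exact: KIabs_bound.
    by rewrite -EFinM -expr2 real_normK ?num_real.
rewrite ge0_integralD //.
all: try (by move=> x _; rewrite lee_fin sqr_ge0).
all: try (by apply/measurable_EFinP; exact: measurable_funX).
all: try (by move=> x _; apply: KI_ge0 => y; rewrite lee_fin sqr_ge0).
rewrite Stat //.
all: try (by move=> x; rewrite lee_fin sqr_ge0).
all: try (by apply/measurable_EFinP; exact: measurable_funX).
exact: lte_add_pinfty.
Qed.

End D.

End XD.
Import XD.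

Module XD2.
Set Implicit Arguments. Unset Strict Implicit.
Import Order.TTheory GRing.Theory Num.Theory.
Import numFieldNormedType.Exports.
Local Open Scope classical_set_scope.
Local Open Scope ring_scope.

Section D2.
Context d (T : measurableType d) (R : realType) (pi : probability T R)
  (K : R.-pker T ~> T) (hrev : reversible K pi).

Lemma KI_le (u v : T -> R) x : measurable_fun setT u -> measurable_fun setT v -> (forall y, 0 <= u y) ->
  (forall y, u y <= v y) -> (KI K (EFin \o u) x <= KI K (EFin \o v) x)%E.
Proof.
move=> mu mv u0 uv; apply: ge0_le_integral => //.
all: try (by move=> y _; rewrite lee_fin).
all: try exact/measurable_EFinP.
all: try (by move=> y _; rewrite lee_fin uv).
Qed.

Lemma Bf_fin (g h u v : T -> R) : inL2 pi g -> inL2 pi h ->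
  measurable_fun setT u -> measurable_fun setT v ->
  (forall x, 0 <= u x) -> (forall x, u x <= `|g x|) ->
  (forall x, 0 <= v x) -> (forall x, v x <= `|h x|) ->
  Bf pi K (EFin \o u) (EFin \o v) \is a fin_num.
Proof.
move=> g2 h2 mu mv u0 ug v0 vh.
have [mh _] := h2.
have mah : measurable_fun setT (fun y => `|h y|) by exact: measurableT_comp.
rewrite ge0_fin_numE; last first.
  by apply: integral_ge0 => x _; rewrite mule_ge0 ?lee_fin // KI_ge0 // => y; rewrite lee_fin.
apply: (le_lt_trans _ (Bf_absfin hrev g2 h2)).
apply: ge0_le_integral => //.
- by move=> x _; rewrite mule_ge0 ?lee_fin // KI_ge0 // => y; rewrite lee_fin.
- apply: emeasurable_funM; first exact/measurable_EFinP.
  by apply: KI_meas; [move=> y; rewrite lee_fin | exact/measurable_EFinP].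
- apply: emeasurable_funM; first by apply/measurable_EFinP; case: g2 => mg _; exact: measurableT_comp.
  by apply: KI_meas; [move=> y; rewrite lee_fin | exact/measurable_EFinP].
- move=> x _; apply: lee_pmul.
  + by rewrite lee_fin.
  + by apply: KI_ge0 => y; rewrite lee_fin.
  + by rewrite lee_fin.
  + exact: KI_le.
Qed.

End D2.

End XD2.
Import XD2.

Module XD3.
Set Implicit Arguments. Unset Strict Implicit.
Import Order.TTheory GRing.Theory Num.Theory.
Import numFieldNormedType.Exports.
Local Open Scope classical_set_scope.
Local Open Scope ring_scope.

Section D3.
Context d (T : measurableType d) (R : realType) (pi : probability T R)
  (K : R.-pker T ~> T) (hrev : reversible K pi).

Local Notation B u v := (Bf pi K (EFin \o u) (EFin \o v)).

Lemma Bterm_int (g h u v : T -> R) : inL2 pi g -> inL2 pi h ->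
  measurable_fun setT u -> measurable_fun setT v ->
  (forall x, 0 <= u x) -> (forall x, u x <= `|g x|) ->
  (forall x, 0 <= v x) -> (forall x, v x <= `|h x|) ->
  pi.-integrable setT (fun x => (u x)%:E * KI K (EFin \o v) x)%E.
Proof.
move=> g2 h2 mu mv u0 ug v0 vh.
have mt : measurable_fun setT (fun x => (u x)%:E * KI K (EFin \o v) x)%E.
  apply: emeasurable_funM; first exact/measurable_EFinP.
  by apply: KI_meas; [move=> y; rewrite lee_fin | exact/measurable_EFinP].
apply/integrableP; split => //.
have KI0 x : (0 <= KI K (EFin \o v) x)%E by apply: KI_ge0 => y; rewrite lee_fin.
rewrite (eq_integral (fun x => (u x)%:E * KI K (EFin \o v) x))%E; last first.
  by move=> x _; rewrite gee0_abs // mule_ge0 // lee_fin.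
rewrite -ge0_fin_numE; last by apply: integral_ge0 => x _; rewrite mule_ge0 ?lee_fin.
exact: (Bf_fin hrev g2 h2 mu mv u0 ug v0 vh).
Qed.

Lemma KopE (h : T -> R) x :
  Kop K h x = fine (KI K (EFin \o pp h) x - KI K (EFin \o nn h) x)%E.
Proof.
rewrite /Kop /Rintegral integralE.
by congr (fine (_ - _)); apply: eq_integral => y _; rewrite ?ppE ?nnE.
Qed.

Lemma Dec (g h : T -> R) : inL2 pi g -> inL2 pi h ->
  \int[pi]_x (g x * Kop K h x) =
  fine (B (pp g) (pp h)) - fine (B (pp g) (nn h)) - fine (B (nn g) (pp h))
  + fine (B (nn g) (nn h)).
Proof.
move=> g2 h2; have [mg _] := g2; have [mh _] := h2.
have mpg := pp_meas mg; have mng := nn_meas mg.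
have mph := pp_meas mh; have mnh := nn_meas mh.
have i1 := Bterm_int g2 h2 mpg mph (pp_ge0 g) (pp_le g) (pp_ge0 h) (pp_le h).
have i2 := Bterm_int g2 h2 mpg mnh (pp_ge0 g) (pp_le g) (nn_ge0 h) (nn_le h).
have i3 := Bterm_int g2 h2 mng mph (nn_ge0 g) (nn_le g) (pp_ge0 h) (pp_le h).
have i4 := Bterm_int g2 h2 mng mnh (nn_ge0 g) (nn_le g) (nn_ge0 h) (nn_le h).
have f1 := Bf_fin hrev g2 h2 mpg mph (pp_ge0 g) (pp_le g) (pp_ge0 h) (pp_le h).
have f2 := Bf_fin hrev g2 h2 mpg mnh (pp_ge0 g) (pp_le g) (nn_ge0 h) (nn_le h).
have f3 := Bf_fin hrev g2 h2 mng mph (nn_ge0 g) (nn_le g) (pp_ge0 h) (pp_le h).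
have f4 := Bf_fin hrev g2 h2 mng mnh (nn_ge0 g) (nn_le g) (nn_ge0 h) (nn_le h).
set t1 := (fun x => (pp g x)%:E * KI K (EFin \o pp h) x)%E in i1.
set t2 := (fun x => (pp g x)%:E * KI K (EFin \o nn h) x)%E in i2.
set t3 := (fun x => (nn g x)%:E * KI K (EFin \o pp h) x)%E in i3.
set t4 := (fun x => (nn g x)%:E * KI K (EFin \o nn h) x)%E in i4.
have mah : measurable_fun setT (fun y => `|h y|%R) by exact: measurableT_comp.
have iah : pi.-integrable setT (EFin \o (fun y => `|h y|%R)).
  have P1 : pi setT = 1%E by exact: probability_setT.
  apply: (sq_int_int P1 mah).
  exact: (@eq_integrable _ _ _ pi _ measurableT _ _
    (fun x _ => congr1 EFin (esym (real_normK (num_real (h x))))) (L2_int h2)).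
have ae : {ae pi, forall x, setT x -> KI K (EFin \o (fun y => `|h y|%R)) x \is a fin_num}.
  apply: integrable_ae => //; apply/integrableP; split.
    by apply: KI_meas; [move=> y; rewrite lee_fin | exact/measurable_EFinP].
  have KI0 x : (0 <= KI K (EFin \o (fun y => `|h y|%R)) x)%E.
    by apply: KI_ge0 => y; rewrite lee_fin.
  under eq_integral do rewrite gee0_abs //.
  rewrite Stat //; last 2 first.
  - by move=> y; rewrite lee_fin.
  - exact/measurable_EFinP.
  move/integrableP : iah => [_].
  rewrite (eq_integral (EFin \o (fun y => `|h y|%R))) // => x _.
  by rewrite /comp abse_EFin normr_id.
have pt x : KI K (EFin \o (fun y => `|h y|%R)) x \is a fin_num ->
    (g x * Kop K h x)%:E = (t1 x - t2 x - t3 x + t4 x)%E.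
  move=> fx.
  have P : KI K (EFin \o pp h) x \is a fin_num.
    rewrite ge0_fin_numE; last by apply: KI_ge0 => y; rewrite lee_fin pp_ge0.
    apply: (le_lt_trans (KI_le K x mph mah (pp_ge0 h) (pp_le h))).
    by rewrite -ge0_fin_numE // KI_ge0 // => y; rewrite lee_fin.
  have M : KI K (EFin \o nn h) x \is a fin_num.
    rewrite ge0_fin_numE; last by apply: KI_ge0 => y; rewrite lee_fin nn_ge0.
    apply: (le_lt_trans (KI_le K x mnh mah (nn_ge0 h) (nn_le h))).
    by rewrite -ge0_fin_numE // KI_ge0 // => y; rewrite lee_fin.
  rewrite KopE /t1 /t2 /t3 /t4 -(fineK P) -(fineK M) -EFinB /=.
  rewrite -!EFinM -!EFinB -EFinD; congr EFin.
  rewrite [g x]ppnn; ring.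
have eqI : (\int[pi]_x (g x * Kop K h x)%:E = \int[pi]_x (t1 x - t2 x - t3 x + t4 x))%E.
  apply: ae_eq_integral => //.
  - apply/measurable_EFinP; apply: measurable_funM => //; exact: Kop_meas.
  - apply: emeasurable_funD; last exact: (measurable_int _ i4).
    apply: emeasurable_funB; last exact: (measurable_int _ i3).
    apply: emeasurable_funB; first exact: (measurable_int _ i1).
    exact: (measurable_int _ i2).
  - by apply: filterS ae => x H _; apply: pt; apply: H.
rewrite /Rintegral eqI.
have i12 : pi.-integrable setT (fun x => t1 x - t2 x)%E by exact: integrableB.
have i123 : pi.-integrable setT (fun x => t1 x - t2 x - t3 x)%E by exact: integrableB.
rewrite (integralD measurableT i123 i4) (integralB measurableT i12 i3) (integralB measurableT i1 i2).
have e1 : (\int[pi]_x t1 x = (fine (B (pp g) (pp h)))%:E)%E by rewrite fineK.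
have e2 : (\int[pi]_x t2 x = (fine (B (pp g) (nn h)))%:E)%E by rewrite fineK.
have e3 : (\int[pi]_x t3 x = (fine (B (nn g) (pp h)))%:E)%E by rewrite fineK.
have e4 : (\int[pi]_x t4 x = (fine (B (nn g) (nn h)))%:E)%E by rewrite fineK.
by rewrite e1 e2 e3 e4 -!EFinB -EFinD.
Qed.

End D3.

End XD3.
Import XD3.

Module XA.
Import Order.TTheory GRing.Theory Num.Theory.
Local Open Scope ring_scope.

Lemma alg (R : realType) (m : nat -> R) : 0 < m 0%N -> (forall k, 0 <= m k) ->
  (forall k, m k.+1 ^+ 2 <= m k * m k.+2) ->
  forall n, (m 1%N / m 0%N) ^+ n <= m n / m 0%N.
Proof.
move=> m0 mge mlc n.
set r := m 1%N / m 0%N.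
have r0 : 0 <= r by rewrite divr_ge0 // ltW.
suff : r ^+ n * m 0%N <= m n by move=> H; rewrite ler_pdivlMr.
have [r00|rp] := eqVneq r 0.
  case: n => [|n]; first by rewrite expr0 mul1r.
  by rewrite r00 expr0n /= mul0r.
have rpos : 0 < r by rewrite lt_def rp r0.
have Q : forall k, 0 < m k /\ r * m k <= m k.+1.
  elim=> [|k [mk rk]].
    by split => //; rewrite /r mulrAC -mulrA divff ?mulr1 // gt_eqF.
  have mk1 : 0 < m k.+1 by apply: lt_le_trans rk; rewrite mulr_gt0.
  split => //.
  have H := mlc k.
  have : m k.+1 * (r * m k) <= m k * m k.+2.
    apply: le_trans H; rewrite expr2 ler_pM2l //.
  have -> : m k.+1 * (r * m k) = m k * (r * m k.+1) by ring.
  by rewrite ler_pM2l.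
elim: n => [|n IH]; first by rewrite expr0 mul1r.
have [_ Qn] := Q n.
by rewrite exprS -mulrA; apply: le_trans Qn; rewrite ler_pM2l.
Qed.

End XA.
Import XA.

Module XF.
Set Implicit Arguments. Unset Strict Implicit.
Import Order.TTheory GRing.Theory Num.Theory.
Import numFieldNormedType.Exports.
Local Open Scope classical_set_scope.
Local Open Scope ring_scope.

Section F.
Context d (T : measurableType d) (R : realType) (pi : probability T R)
  (K : R.-pker T ~> T) (hrev : reversible K pi).

Lemma SymR (g h : T -> R) : inL2 pi g -> inL2 pi h ->
  \int[pi]_x (g x * Kop K h x) = \int[pi]_x (Kop K g x * h x).
Proof.
move=> g2 h2; have [mg _] := g2; have [mh _] := h2.
rewrite (Dec hrev g2 h2).
under [RHS]eq_Rintegral do rewrite mulrC.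
rewrite (Dec hrev h2 g2).
have S (u v : T -> R) : measurable_fun setT u -> measurable_fun setT v ->
    (forall x, 0 <= u x) -> (forall x, 0 <= v x) ->
    Bf pi K (EFin \o u) (EFin \o v) = Bf pi K (EFin \o v) (EFin \o u).
  move=> mu mv u0 v0; apply: Bf_sym => //;
    try (by move=> x; rewrite /comp lee_fin); exact/measurable_EFinP.
rewrite (S (pp h) (pp g) (pp_meas mh) (pp_meas mg) (@pp_ge0 _ _ h) (@pp_ge0 _ _ g)).
rewrite (S (pp h) (nn g) (pp_meas mh) (nn_meas mg) (@pp_ge0 _ _ h) (@nn_ge0 _ _ g)).
rewrite (S (nn h) (pp g) (nn_meas mh) (pp_meas mg) (@nn_ge0 _ _ h) (@pp_ge0 _ _ g)).
rewrite (S (nn h) (nn g) (nn_meas mh) (nn_meas mg) (@nn_ge0 _ _ h) (@nn_ge0 _ _ g)).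
have X (a b c e : R) : a - b - c + e = a - c - b + e by ring.
exact: X.
Qed.

Lemma Kpow_L2 f : inL2 pi f -> forall k, inL2 pi (Kpow K k f).
Proof.
move=> f2; elim=> [//|k IH].
by rewrite /Kpow iterS; exact: KL2.
Qed.

End F.


End XF.
Import XF.

Unset Implicit Arguments.
Theorem lemma7 (d : measure_display) (T : measurableType d) (R : realType)
  (pi : probability T R) (K : R.-pker T ~> T)
  (hrev : reversible K pi) (f : T -> R) (hf : inL2 pi f)
  (hf0 : L2norm2 pi f != 0) (n : nat) (hn : (1 <= n)%N) :
  (L2norm2 pi (Kop K f) / L2norm2 pi f) ^+ n
    <= L2norm2 pi (Kpow K n f) / L2norm2 pi f.
Proof.
pose m k := L2norm2 pi (Kpow K k f).
have mge k : 0 <= m k by apply: Rintegral_ge0 => x _; exact: sqr_ge0.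
have m0 : 0 < m 0%N by rewrite lt_def hf0 (mge 0%N).
have KS k : Kpow K k.+1 f = Kop K (Kpow K k f) by rewrite /Kpow iterS.
have mlc k : m k.+1 ^+ 2 <= m k * m k.+2.
  have u2 := Kpow_L2 hrev hf k.
  have ku2 := KL2 hrev u2.
  have kku2 := KL2 hrev ku2.
  have e : m k.+1 = \int[pi]_x (Kpow K k f x * Kop K (Kop K (Kpow K k f)) x).
    rewrite (SymR hrev u2 ku2) /m /L2norm2 KS.
    by apply: eq_Rintegral => x _; rewrite expr2.
  rewrite e /m !KS.
  have [mu _] := u2; have [mkku _] := kku2.
  exact: (CS mu mkku (L2_int u2) (L2_int kku2)).
have H := @alg R m m0 mge mlc n.
exact H.
Qed.
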